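(* Setting: $n$ agents on a connected, undirected weighted graph with Laplacian $L_n$; $L=L_n\otimes I_m$. For each $i$, $\Omega_i\subset\mathbb R^{q_i}$ is closed and convex, $f^i$ is strictly convex on an open set containing $\Omega_i$, $W_i\in\mathbb R^{m\times q_i}$, $d_i\in\mathbb R^m$ with $\sum_id_i=d_0$; $\Omega=\prod_i\Omega_i$, $f(x)=\sum_if^i(x_i)$, $W=[W_1,\dots,W_n]$, $\overline W=\mathrm{diag}\{W_1,\dots,W_n\}$, $d=[d_1^{\rm T},\dots,d_n^{\rm T}]^{\rm T}$; Slater's condition holds (some $x$ in the interior of $\Omega$ has $Wx=d_0$). Let $(x^*,\lambda^*,z^* )\in\Omega\times\mathbb R^{nm}\times\mathbb R^{nm}$ be an equilibrium of the DDFA inclusion, i.e. there is $g\in\partial f(x^* )$ with $P_\Omega[x^*-g+\overline W^{\rm T}\lambda^*]=x^*$, $d-\overline Wx^*-Lz^*=0$, $L\lambda^*=0$. Define $$V(x,\lambda,z)=f(x)-f(x^* )+(\lambda^* )^{\rm T}(d-\overline Wx)+\tfrac12\|x-x^*\|^2+\tfrac12\|\lambda-\lambda^*\|^2+\tfrac12\|z-z^*\|^2.$$ Then on $\Omega\times\mathbb R^{nm}\times\mathbb R^{nm}$, $V$ is positive definite: $V\ge0$, $V(x,\lambda,z)=0$ if and only if $(x,\lambda,z)=(x^*,\lambda^*,z^* )$, and $V(x,\lambda,z)\to\infty$ as $\|(x,\lambda,z)\|\to\infty$.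
   Context: $\partial f$ is the convex subdifferential; $P_\Omega$ the Euclidean projection onto $\Omega$. *)

(* Defs.v *)
From HB Require Import structures.
From mathcomp Require Import all_boot all_order all_algebra.
From mathcomp Require Import all_classical all_reals all_analysis.
Set Implicit Arguments. Unset Strict Implicit. Unset Printing Implicit Defensive.
Import Order.TTheory GRing.Theory Num.Theory.
Import numFieldNormedType.Exports.
Local Open Scope classical_set_scope.
Local Open Scope ring_scope.

Section Defs.
Variable R : realType.

Definition dotv k (u v : 'cV[R]_k) : R := \sum_(j < k) u j 0 * v j 0.
Definition sqnorm k (u : 'cV[R]_k) : R := dotv u u.

Definition convex_set_on k (S : set 'cV[R]_k) : Prop :=
  forall x y (t : R), S x -> S y -> 0 <= t <= 1 -> S (t *: x + (1 - t) *: y).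

Definition strictly_convex_on k (S : set 'cV[R]_k) (h : 'cV[R]_k -> R) : Prop :=
  forall x y (t : R), S x -> S y -> x != y -> 0 < t < 1 ->
    h (t *: x + (1 - t) *: y) < t * h x + (1 - t) * h y.

Definition laplacian n (a : 'I_n -> 'I_n -> R) : 'M[R]_n :=
  \matrix_(i, j) (if i == j then \sum_(k < n | k != i) a i k else - a i j).

Definition connected_weighted_graph n (a : 'I_n -> 'I_n -> R) : Prop :=
  (forall i j, a i j = a j i) /\ (forall i j, 0 <= a i j) /\
  (forall i j, connect [rel u v | 0 < a u v] i j).

Definition pvec n (q : 'I_n -> nat) := forall i : 'I_n, 'cV[R]_(q i).

Definition psqnorm n (q : 'I_n -> nat) (x : pvec q) : R :=
  \sum_(i < n) sqnorm (x i).

Definition psub n (q : 'I_n -> nat) (x y : pvec q) : pvec q := fun i => x i - y i.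

Definition in_prod n (q : 'I_n -> nat) (Om : forall i, set 'cV[R]_(q i)) (x : pvec q) :=
  forall i, Om i (x i).

(* L = L_n (x) I_m acting on stacked vectors lam = (lam_1,...,lam_n), lam_i in R^m *)
Definition kronL n m (Ln : 'M[R]_n) (lam : 'I_n -> 'cV[R]_m) : 'I_n -> 'cV[R]_m :=
  fun i => \sum_(j < n) Ln i j *: lam j.

Definition is_proj n (q : 'I_n -> nat) (Om : forall i, set 'cV[R]_(q i)) (y p : pvec q) :=
  in_prod Om p /\
  forall w, in_prod Om w -> psqnorm (psub y p) <= psqnorm (psub y w).

Definition in_subdiff n (q : 'I_n -> nat) (U : forall i, set 'cV[R]_(q i))
  (f : forall i, 'cV[R]_(q i) -> R) (x g : pvec q) :=
  forall y : pvec q, in_prod U y ->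
    \sum_(i < n) f i (y i) >= \sum_(i < n) f i (x i) + \sum_(i < n) dotv (g i) (y i - x i).

End Defs.

(* Main.v *)
Require Import Defs.
From HB Require Import structures.
From mathcomp Require Import all_boot all_order all_algebra.
From mathcomp Require Import all_classical all_reals all_analysis.
From mathcomp Require Import ring lra.
Import Order.TTheory GRing.Theory Num.Theory.
Import numFieldNormedType.Exports.
Local Open Scope classical_set_scope.
Local Open Scope ring_scope.



Set Implicit Arguments.
Section Helpers.
Variable R : realType.

Lemma dotvC k (u v : 'cV[R]_k) : dotv u v = dotv v u.
Proof. by apply: eq_bigr => j _; rewrite mulrC. Qed.

Lemma dotvDr k (u v w : 'cV[R]_k) : dotv u (v + w) = dotv u v + dotv u w.
Proof. rewrite /dotv -big_split /=; apply: eq_bigr => j _; rewrite !mxE; ring. Qed.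

Lemma dotvBr k (u v w : 'cV[R]_k) : dotv u (v - w) = dotv u v - dotv u w.
Proof. rewrite /dotv -sumrB /=; apply: eq_bigr => j _; rewrite !mxE; ring. Qed.

Lemma dotvZr k (u v : 'cV[R]_k) c : dotv u (c *: v) = c * dotv u v.
Proof. rewrite /dotv mulr_sumr; apply: eq_bigr => j _; rewrite !mxE; ring. Qed.

Lemma dotv0r k (u : 'cV[R]_k) : dotv u 0 = 0.
Proof. by rewrite /dotv big1 // => j _; rewrite mxE mulr0. Qed.

Lemma dotv_sumr k p (u : 'cV[R]_k) (F : 'I_p -> 'cV[R]_k) :
  dotv u (\sum_(j < p) F j) = \sum_(j < p) dotv u (F j).
Proof.
rewrite /dotv; under eq_bigr => i _ do rewrite summxE mulr_sumr.
by rewrite exchange_big.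
Qed.

Lemma dotv_mulmx k l (u : 'cV[R]_k) (A : 'M[R]_(k, l)) (v : 'cV[R]_l) :
  dotv u (A *m v) = dotv (A^T *m u) v.
Proof.
rewrite /dotv; under eq_bigr => i _ do rewrite mxE mulr_sumr.
rewrite exchange_big; apply: eq_bigr => j _; rewrite mxE mulr_suml.
by apply: eq_bigr => i _; rewrite !mxE; ring.
Qed.

Lemma sqnorm_ge0 k (u : 'cV[R]_k) : 0 <= sqnorm u.
Proof. by apply: sumr_ge0 => j _; rewrite -expr2 sqr_ge0. Qed.

Lemma sqnorm_eq0 k (u : 'cV[R]_k) : sqnorm u = 0 -> u = 0.
Proof.
move=> /eqP; rewrite /sqnorm /dotv psumr_eq0; last by move=> j _; rewrite -expr2 sqr_ge0.
move=> /allP H; apply/matrixP => j c; rewrite (ord1 c) mxE.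
have := H j (mem_index_enum _); rewrite implyTb mulf_eq0 orbb => /eqP //.
Qed.

Lemma sqnorm_BZ k (v u : 'cV[R]_k) t :
  sqnorm (v - t *: u) = sqnorm v - 2 * t * dotv v u + t ^+ 2 * sqnorm u.
Proof.
rewrite /sqnorm /dotv !mulr_sumr -sumrB -big_split /=.
by apply: eq_bigr => j _; rewrite !mxE; ring.
Qed.

Lemma sqnorm_sub_ge k (u v : 'cV[R]_k) :
  sqnorm u / 2 - sqnorm v <= sqnorm (u - v).
Proof.
rewrite /sqnorm /dotv mulr_suml -sumrB; apply: ler_sum => j _; rewrite !mxE.
have := sqr_ge0 (u j 0 - 2 * v j 0); nra.
Qed.


Lemma laplacian_sym n (a : 'I_n -> 'I_n -> R) :
  (forall i j, a i j = a j i) -> forall i j, laplacian a i j = laplacian a j i.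
Proof.
move=> Ha i j; rewrite !mxE eq_sym; case: eqP => [->|_] //; by rewrite Ha.
Qed.

Lemma kron_orth n m (a : 'I_n -> 'I_n -> R) (ls zs : 'I_n -> 'cV[R]_m) :
  (forall i j, a i j = a j i) -> (forall i, kronL (laplacian a) ls i = 0) ->
  \sum_(i < n) dotv (ls i) (kronL (laplacian a) zs i) = 0.
Proof.
move=> Ha Hl.
transitivity (\sum_(j < n) dotv (kronL (laplacian a) ls j) (zs j)); last first.
  by rewrite big1 // => j _; rewrite Hl dotvC dotv0r.
rewrite /kronL; under eq_bigr => i _ do rewrite dotv_sumr.
rewrite exchange_big; apply: eq_bigr => j _.
rewrite dotvC dotv_sumr; apply: eq_bigr => i _.
by rewrite dotvZr dotvC dotvZr laplacian_sym.
Qed.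

Lemma proj_vi n (q : 'I_n -> nat) (Om : forall i, set 'cV[R]_(q i)) (y xs x : pvec R q) :
  (forall i, convex_set_on (Om i)) -> is_proj Om y xs -> in_prod Om x ->
  \sum_(i < n) dotv (y i - xs i) (x i - xs i) <= 0.
Proof.
move=> Hc [Hxs Hmin] Hx.
set P := \sum_(i < n) dotv (y i - xs i) (x i - xs i).
set Q := \sum_(i < n) sqnorm (x i - xs i).
have key : forall t : R, 0 < t <= 1 -> 2 * P <= t * Q.
  move=> t /andP[t0 t1].
  pose w : pvec R q := fun i => t *: x i + (1 - t) *: xs i.
  have Hw : in_prod Om w by move=> i; apply: Hc => //; rewrite (ltW t0) t1.
  have := Hmin w Hw; rewrite /psqnorm /psub.
  have -> : \sum_(i < n) sqnorm (y i - w i) =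
     \sum_(i < n) sqnorm ((y i - xs i) - t *: (x i - xs i)).
    apply: eq_bigr => i _; congr sqnorm; apply/matrixP => j k; rewrite !mxE; ring.
  under [X in _ <= X]eq_bigr => i _ do rewrite sqnorm_BZ.
  rewrite big_split /= sumrB -!mulr_sumr -/P -/Q => H.
  have : 0 <= t * (t * Q - 2 * P) by lra.
  by rewrite pmulr_rge0 // subr_ge0.
have Q0 : 0 <= Q by apply: sumr_ge0 => i _; apply: sqnorm_ge0.
rewrite leNgt; apply/negP => P0.
have PQ : 0 < P + Q by lra.
pose t := P / (P + Q).
have t0 : 0 < t by rewrite divr_gt0.
have tPQ : t * (P + Q) = P by rewrite /t divfK // gt_eqF.
have t1 : t <= 1 by rewrite /t ler_pdivrMr // mul1r; lra.
have := key t; rewrite t0 t1 => /(_ isT) H.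
have tP : 0 < t * P by rewrite mulr_gt0.
have tQ : t * Q = P - t * P by rewrite -[X in _ = X - _]tPQ; ring.
lra.
Qed.


Lemma sum_sub_ge n (k : 'I_n -> nat) (u v : forall i, 'cV[R]_(k i)) :
  (\sum_(i < n) sqnorm (u i)) / 2 - \sum_(i < n) sqnorm (v i)
  <= \sum_(i < n) sqnorm (u i - v i).
Proof. rewrite mulr_suml -sumrB; apply: ler_sum => i _; exact: sqnorm_sub_ge. Qed.

Lemma sum_sq_ge0 n (k : 'I_n -> nat) (u : forall i, 'cV[R]_(k i)) :
  0 <= \sum_(i < n) sqnorm (u i).
Proof. by apply: sumr_ge0 => i _; apply: sqnorm_ge0. Qed.

Lemma sum_sq_eq0 n (k : 'I_n -> nat) (u : forall i, 'cV[R]_(k i)) :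
  \sum_(i < n) sqnorm (u i) = 0 -> forall i, u i = 0.
Proof.
move=> H i; apply: sqnorm_eq0.
have := @psumr_eq0P R 'I_n xpredT (fun j => sqnorm (u j)) (fun j _ => sqnorm_ge0 (u j)) H.
by apply.
Qed.

Lemma sqnorm0 k : sqnorm (0 : 'cV[R]_k) = 0.
Proof. exact: dotv0r. Qed.

End Helpers.
Unset Implicit Arguments.


Theorem lemma7 (R : realType) (n m : nat) (q : 'I_n -> nat)
  (a : 'I_n -> 'I_n -> R)
  (Om U : forall i : 'I_n, set 'cV[R]_(q i))
  (f : forall i : 'I_n, 'cV[R]_(q i) -> R)
  (W : forall i : 'I_n, 'M[R]_(m, q i))
  (d : 'I_n -> 'cV[R]_m)
  (xs : pvec R q) (ls zs : 'I_n -> 'cV[R]_m) (g : pvec R q) :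
  connected_weighted_graph a ->
  (forall i, closed (Om i) /\ convex_set_on (Om i)) ->
  (forall i, open (U i) /\ convex_set_on (U i) /\ Om i `<=` U i /\
             strictly_convex_on (U i) (f i)) ->
  (* Slater's condition *)
  (exists x0 : pvec R q, (forall i, (interior (Om i)) (x0 i)) /\
     \sum_(i < n) W i *m x0 i = \sum_(i < n) d i) ->
  (* (xs, ls, zs) is an equilibrium of the DDFA inclusion *)
  in_prod Om xs ->
  in_subdiff U f xs g ->
  is_proj Om (fun i => xs i - g i + (W i)^T *m ls i) xs ->
  (forall i, d i - W i *m xs i - kronL (laplacian a) zs i = 0) ->
  (forall i, kronL (laplacian a) ls i = 0) ->
  let V := fun (x : pvec R q) (l z : 'I_n -> 'cV[R]_m) =>
      \sum_(i < n) f i (x i) - \sum_(i < n) f i (xs i)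
      + \sum_(i < n) dotv (ls i) (d i - W i *m x i)
      + 2^-1 * psqnorm (psub x xs)
      + 2^-1 * \sum_(i < n) sqnorm (l i - ls i)
      + 2^-1 * \sum_(i < n) sqnorm (z i - zs i) in
  (forall x l z, in_prod Om x -> 0 <= V x l z) /\
  (forall x l z, in_prod Om x -> (V x l z = 0 <-> (x = xs /\ l = ls /\ z = zs))) /\
  (forall M : R, exists r : R, forall x l z, in_prod Om x ->
     Num.sqrt (psqnorm x + \sum_(i < n) sqnorm (l i) + \sum_(i < n) sqnorm (z i)) > r ->
     V x l z > M).

Proof.
move=> [Ha _] Hconv HU _ Hxs Hsub Hproj Hd Hl V.
have Hc : forall i, convex_set_on (Om i) by move=> i; case: (Hconv i).
have Kd : forall i, d i - W i *m xs i = kronL (laplacian a) zs i.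
  by move=> i; apply: subr0_eq; exact: Hd.
have KO := kron_orth zs Ha Hl.
have Key1 : forall x : pvec R q,
  \sum_(i < n) dotv (ls i) (d i - W i *m x i) =
  - \sum_(i < n) dotv ((W i)^T *m ls i) (x i - xs i).
  move=> x.
  transitivity (\sum_(i < n) (dotv (ls i) (kronL (laplacian a) zs i)
     - dotv ((W i)^T *m ls i) (x i - xs i))); last by rewrite sumrB KO sub0r.
  apply: eq_bigr => i _.
  have -> : d i - W i *m x i = (d i - W i *m xs i) - W i *m (x i - xs i).
    rewrite mulmxBr; apply/matrixP => j k; rewrite !mxE; ring.
  by rewrite Kd !dotvBr dotv_mulmx dotvBr.
have Tge : forall x : pvec R q, in_prod Om x ->
  0 <= \sum_(i < n) f i (x i) - \sum_(i < n) f i (xs i)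
       + \sum_(i < n) dotv (ls i) (d i - W i *m x i).
  move=> x Hx; rewrite Key1.
  have Ux : in_prod U x by move=> i; case: (HU i) => _ [_ [sub _]]; apply: sub.
  have Hs := Hsub x Ux.
  have Hv := proj_vi Hc Hproj Hx.
  have e : forall i, dotv (xs i - g i + (W i)^T *m ls i - xs i) (x i - xs i) =
      dotv ((W i)^T *m ls i) (x i - xs i) - dotv (g i) (x i - xs i).
    move=> i; rewrite dotvC [dotv ((W i)^T *m ls i) _]dotvC [dotv (g i) _]dotvC -dotvBr.
    congr dotv; apply/matrixP => j k; rewrite !mxE; ring.
  rewrite (eq_bigr _ (fun i _ => e i)) in Hv.
  rewrite sumrB in Hv; lra.
have Vge : forall x l z, in_prod Om x ->
  V x l z = (\sum_(i < n) f i (x i) - \sum_(i < n) f i (xs i)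
       + \sum_(i < n) dotv (ls i) (d i - W i *m x i))
     + 2^-1 * psqnorm (psub x xs)
     + 2^-1 * \sum_(i < n) sqnorm (l i - ls i)
     + 2^-1 * \sum_(i < n) sqnorm (z i - zs i) by [].
have A0 : forall x : pvec R q, 0 <= psqnorm (psub x xs) by move=> x; exact: sum_sq_ge0.
have B0 : forall l c : 'I_n -> 'cV[R]_m, 0 <= \sum_(i < n) sqnorm (l i - c i).
  by move=> l c; exact: (@sum_sq_ge0 _ n (fun _ => m)).
split; [|split].
- move=> x l z Hx; rewrite Vge //; have := Tge x Hx; have := A0 x; have := B0 l ls; have := B0 z zs.
  lra.
- move=> x l z Hx; split.
  + rewrite Vge // => H0.
    have := Tge x Hx; have := A0 x; have := B0 l ls; have := B0 z zs => h1 h2 h3 h4.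
    have ex : psqnorm (psub x xs) = 0 by lra.
    have el : \sum_(i < n) sqnorm (l i - ls i) = 0 by lra.
    have ez : \sum_(i < n) sqnorm (z i - zs i) = 0 by lra.
    have Ex := @sum_sq_eq0 _ n q (psub x xs) ex; have El := @sum_sq_eq0 _ n (fun _ => m) _ el.
    have Ez := @sum_sq_eq0 _ n (fun _ => m) _ ez.
    split; [|split].
    * apply: functional_extensionality_dep => i; apply: subr0_eq; exact: Ex.
    * apply: funext => i; apply: subr0_eq; exact: El.
    * apply: funext => i; apply: subr0_eq; exact: Ez.
  + move=> [-> [-> ->]]; rewrite Vge //.
    rewrite Key1 /psqnorm /psub.
    have z1 : \sum_(i < n) dotv ((W i)^T *m ls i) (xs i - xs i) = 0.
      by rewrite big1 // => i _; rewrite subrr dotv0r.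
    have z2 : forall k (c : 'I_n -> 'cV[R]_k), \sum_(i < n) sqnorm (c i - c i) = 0.
      by move=> k c; rewrite big1 // => i _; rewrite subrr sqnorm0.
    have z3 : \sum_(i < n) sqnorm (xs i - xs i) = 0.
      by rewrite big1 // => i _; rewrite subrr sqnorm0.
    by rewrite z1 z3 (z2 _ ls) (z2 _ zs) !mulr0 subrr !addr0 subr0.
- move=> M.
  set C := psqnorm xs + \sum_(i < n) sqnorm (ls i) + \sum_(i < n) sqnorm (zs i).
  have C0 : 0 <= C.
    have := @sum_sq_ge0 _ n q xs; have := @sum_sq_ge0 _ n (fun _ => m) ls.
    have := @sum_sq_ge0 _ n (fun _ => m) zs; rewrite /C /psqnorm; lra.
  exists (4 * `|M| + 2 * C + 1) => x l z Hx.
  set S := psqnorm x + \sum_(i < n) sqnorm (l i) + \sum_(i < n) sqnorm (z i).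
  have S0 : 0 <= S.
    have := @sum_sq_ge0 _ n q x; have := @sum_sq_ge0 _ n (fun _ => m) l.
    have := @sum_sq_ge0 _ n (fun _ => m) z; rewrite /S /psqnorm; lra.
  move=> Hr.
  have M0 : M <= `|M| by exact: ler_norm.
  have Mn : 0 <= `|M| by exact: normr_ge0.
  have sS : Num.sqrt S * Num.sqrt S = S by rewrite -expr2 sqr_sqrtr.
  have Sr : 4 * `|M| + 2 * C + 1 < S by nra.
  have h1 := @sum_sub_ge _ n q x xs.
  have h2 := @sum_sub_ge _ n (fun _ => m) l ls.
  have h3 := @sum_sub_ge _ n (fun _ => m) z zs.
  rewrite Vge //; have := Tge x Hx.
  move: Sr; rewrite /S /C /psqnorm /psub in h1 *. lra.
Qed.
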